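(* Let $\alpha=\alpha^m:[m]\to\mathbb N$ be a positional satisfaction function with $\alpha(1)\ge\alpha(2)\ge\dots\ge\alpha(m)$. Then for every instance of $\alpha$-SU-Monroe (with $K\le m$), Algorithm GM outputs a Monroe $K$-assignment $\Phi$ with $\ell_1^\alpha(\Phi)\ge(1-\frac1e)\cdot\mathrm{OPT}$, where $\mathrm{OPT}$ is the maximum of $\ell_1^\alpha$ over all Monroe $K$-assignments.
   Context: Agents $N=[n]$, alternatives $A=\{a_1,\dots,a_m\}$; each agent $i$ has a strict linear order on $A$, $\mathrm{pos}_i(a)$ the position of $a$ ($1$ = best). $\ell_1^\alpha(\Phi)=\sum_{i}\alpha(\mathrm{pos}_i(\Phi(i)))$, where an agent left unassigned (assigned the null alternative $\bot$) is treated as having $\mathrm{pos}_i(\bot)=m$. A Monroe $K$-assignment is $\Phi:N\to A$ with $|\Phi(N)|\le K$ and $|\Phi^{-1}(a)|\le\lceil n/K\rceil$ for all $a$. For $S\subseteq A$ with $|S|\le K$, $\Phi^S_\alpha$ is a partial assignment (each agent mapped to an element of $S$ or to $\bot$) with each $a\in S$ receiving at most $\lceil n/K\rceil$ agents, maximizing $\ell_1^\alpha$ among such partial assignments. Algorithm GM: set $S=\emptyset$; for $K$ iterations, choose $a\in A\setminus S$ maximizing $\ell_1^\alpha(\Phi^{S\cup\{a\}}_\alpha)$ and add it to $S$; output $\Phi^S_\alpha$. *)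

(* Defs.v *)
From Stdlib Require Import Reals.
From mathcomp Require Import all_boot all_fingroup.

Set Implicit Arguments.
Unset Strict Implicit.
Unset Printing Implicit Defensive.

(* A preference profile assigns to every agent i a strict linear order on the
   alternatives, encoded as a permutation  pref i : {perm 'I_m}  with
   pref i a = (position of a in i's ranking) - 1 (0-based rank).
   pos_i(a) is the 1-based position; the null alternative bot gets position m. *)

Definition profile (n m : nat) := 'I_n -> {perm 'I_m}.

Definition pos (n m : nat) (P : profile n m) (i : 'I_n) (a : 'I_m) : nat :=
  (P i a).+1.

Definition opos (n m : nat) (P : profile n m) (i : 'I_n) (x : option 'I_m) : nat :=
  match x with Some a => pos P i a | None => m end.

Definition nonincreasing_on (m : nat) (alpha : nat -> nat) : Prop :=
  forall p q : nat, 1 <= p -> p <= q -> q <= m -> alpha q <= alpha p.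

Definition ell (n m : nat) (alpha : nat -> nat) (P : profile n m)
    (Phi : {ffun 'I_n -> option 'I_m}) : nat :=
  \sum_(i < n) alpha (opos P i (Phi i)).

Definition ell_tot (n m : nat) (alpha : nat -> nat) (P : profile n m)
    (Phi : {ffun 'I_n -> 'I_m}) : nat :=
  \sum_(i < n) alpha (pos P i (Phi i)).

(* ceil(n / K) for K >= 1 *)
Definition cap (n K : nat) : nat := (n + K.-1) %/ K.

Definition monroe (n m K : nat) (Phi : {ffun 'I_n -> 'I_m}) : bool :=
  (#|[set Phi i | i in 'I_n]| <= K) &&
  [forall a : 'I_m, #|[set i | Phi i == a]| <= cap n K].

Definition partial_for (n m K : nat) (S : {set 'I_m})
    (Phi : {ffun 'I_n -> option 'I_m}) : bool :=
  [forall i : 'I_n, if Phi i is Some a then a \in S else true] &&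
  [forall a : 'I_m, #|[set i | Phi i == Some a]| <= cap n K].

Definition best (n m K : nat) (alpha : nat -> nat) (P : profile n m)
    (S : {set 'I_m}) : nat :=
  \max_(Phi : {ffun 'I_n -> option 'I_m} | partial_for K S Phi) ell alpha P Phi.

Definition OPT (n m K : nat) (alpha : nat -> nat) (P : profile n m) : nat :=
  \max_(Phi : {ffun 'I_n -> 'I_m} | monroe K Phi) ell_tot alpha P Phi.

(* A run of Algorithm GM: s k is the alternative added in iteration k
   (k = 0..K-1); prefix_set s k = S before iteration k. *)
Definition prefix_set (m K : nat) (s : 'I_K -> 'I_m) (k : nat) : {set 'I_m} :=
  [set s j | j in [pred j : 'I_K | j < k]].

Definition GM_run (n m K : nat) (alpha : nat -> nat) (P : profile n m)
    (s : 'I_K -> 'I_m) : Prop :=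
  forall k : 'I_K,
    s k \notin prefix_set s k /\
    (forall a : 'I_m, a \notin prefix_set s k ->
       best K alpha P (a |: prefix_set s k) <= best K alpha P (s k |: prefix_set s k)).

Definition one_minus_inv_e : R := Rminus 1 (Rinv (exp 1)).

(* Main.v *)
Require Import Defs.
From Stdlib Require Import Reals Lra Psatz.
From mathcomp Require Import all_boot all_fingroup.
From mathcomp Require Import zify.
Set Implicit Arguments. Unset Strict Implicit. Unset Printing Implicit Defensive.

Definition load (n m : nat) (F : {ffun 'I_n -> option 'I_m}) (c : 'I_m) : nat :=
  #|[set i | F i == Some c]|.

Lemma card_set_sum (n : nat) (p : pred 'I_n) : #|[set i | p i]| = \sum_i (p i : nat).
Proof.
rewrite -sum1_card big_mkcond /=; apply: eq_bigr => i _; rewrite inE; by case: (p i).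
Qed.

Lemma load_upd (n m : nat) (F G : {ffun 'I_n -> option 'I_m}) (j : 'I_n) (c : 'I_m) :
  (forall i, i != j -> G i = F i) ->
  load G c + (F j == Some c) = load F c + (G j == Some c).
Proof.
move=> H; rewrite /load !card_set_sum.
rewrite (bigD1 j) //= [in RHS](bigD1 j) //=.
rewrite (eq_bigr (fun i => (F i == Some c) : nat)).
  by rewrite [LHS]addnAC [RHS]addnAC (addnC (G j == _)).
by move=> i /H ->.
Qed.

Definition swP (n m : nat) (M M0 : {ffun 'I_n -> option 'I_m}) (Sw : {set 'I_n}) :=
  [ffun i => if i \in Sw then M0 i else M i].
Definition swQ (n m : nat) (M M0 : {ffun 'I_n -> option 'I_m}) (Sw : {set 'I_n}) :=
  [ffun i => if i \in Sw then M i else M0 i].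

Lemma swap_sum (n m : nat) (M M0 : {ffun 'I_n -> option 'I_m}) Sw d :
  load (swP M M0 Sw) d + load (swQ M M0 Sw) d = load M d + load M0 d.
Proof.
rewrite /load !card_set_sum -!big_split /=; apply: eq_bigr => i _.
rewrite !ffunE; case: (i \in Sw) => //; exact: addnC.
Qed.

Lemma load_sub (n m : nat) (F G : {ffun 'I_n -> option 'I_m}) c :
  (forall i, F i = Some c -> G i = Some c) -> load F c <= load G c.
Proof.
move=> H; rewrite /load; apply: subset_leq_card; apply/subsetP => i.
by rewrite !inE => /eqP /H ->.
Qed.

Definition inv_ok (n m C : nat) (M M0 : {ffun 'I_n -> option 'I_m}) (a : 'I_m)
   (Sw : {set 'I_n}) (h : option 'I_m) :=
  [/\ (forall i, i \in Sw -> M i != Some a),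
      (forall c, load (swQ M M0 Sw) c <= C) &
      (forall c, load (swP M M0 Sw) c <= C + (Some c == h))].

Lemma swP_upd (n m : nat) (M M0 : {ffun 'I_n -> option 'I_m}) Sw j :
  forall i, i != j -> swP M M0 (j |: Sw) i = swP M M0 Sw i.
Proof. by move=> i ij; rewrite !ffunE in_setU1 (negbTE ij). Qed.
Lemma swQ_upd (n m : nat) (M M0 : {ffun 'I_n -> option 'I_m}) Sw j :
  forall i, i != j -> swQ M M0 (j |: Sw) i = swQ M M0 Sw i.
Proof. by move=> i ij; rewrite !ffunE in_setU1 (negbTE ij). Qed.

Lemma swap_step (n m C : nat) (M M0 : {ffun 'I_n -> option 'I_m}) (a b : 'I_m) :
  a != b ->
  (forall i, M0 i != Some a) -> (forall i, M0 i != Some b) ->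
  (forall c, load M c <= C) -> (forall c, load M0 c <= C) ->
  forall (Sw : {set 'I_n}) (h : option 'I_m),
   inv_ok C M M0 a Sw h ->
   (inv_ok C M M0 a Sw None /\ (forall i, M i = Some b -> i \in Sw)) \/
   (exists j h', j \notin Sw /\ inv_ok C M M0 a (j |: Sw) h').
Proof.
move=> ab M0a M0b LM LM0 Sw h [IA IB IC].
case: (boolP [exists c, C < load (swP M M0 Sw) c]).
  case/existsP=> c Hc.
  have hc : h = Some c.
    case: (eqVneq (Some c) h) => [//|ne]; have := IC c; rewrite (negbTE ne); lia.
  have Pc : load (swP M M0 Sw) c = C.+1 by have := IC c; rewrite hc eqxx; lia.
  have : [exists j, (j \notin Sw) && (M j == Some c)].
    case: (boolP [exists j, (j \notin Sw) && (M j == Some c)]) => // /existsPn Hn; exfalso.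
    have : load (swP M M0 Sw) c <= load M0 c.
      apply: load_sub => i; rewrite ffunE; case: ifP => // iSw Mi.
      by have := Hn i; rewrite iSw Mi /= eqxx.
    have := LM0 c; lia.
  case/existsP=> j /andP [jSw /eqP Mj].
  have ca : c != a.
    apply/eqP => ca; subst c.
    have : load (swP M M0 Sw) a <= load M a.
      apply: load_sub => i; rewrite ffunE; case: ifP => // _ Hi.
      by have := M0a i; rewrite Hi eqxx.
    have := LM a; lia.
  right; exists j, (M0 j); split => //; split.
  - move=> i; rewrite in_setU1; case/orP => [/eqP -> | /IA //].
    by rewrite Mj; apply: contra ca => /eqP [->].
  - move=> d; have U := load_upd d (swQ_upd M M0 Sw (j:=j)).
    rewrite !ffunE setU11 (negbTE jSw) Mj in U.
    have S := swap_sum M M0 Sw c.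
    case: (eqVneq d c) U => [-> | dc] U.
      have := LM c; have := LM0 c; rewrite eqxx in U; lia.
    have := IB d; have : (Some c == Some d) = false by apply/eqP => -[]; apply/eqP; rewrite eq_sym.
    move=> E; rewrite E in U; lia.
  - move=> d; have U := load_upd d (swP_upd M M0 Sw (j:=j)).
    rewrite !ffunE setU11 (negbTE jSw) Mj in U.
    case: (eqVneq d c) U => [-> | dc] U.
      rewrite eqxx eq_sym in U; lia.
    have : (Some c == Some d) = false by apply/eqP => -[]; apply/eqP; rewrite eq_sym.
    move=> E; rewrite E in U; have := IC d; rewrite hc.
    have : (Some d == Some c) = false by apply/eqP => -[]; apply/eqP.
    move=> ->; rewrite eq_sym in U; lia.
move=> /existsPn NO.
have PC : forall c, load (swP M M0 Sw) c <= C by move=> c; have := NO c; lia.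
case: (boolP [exists i, (i \notin Sw) && (M i == Some b)]).
  case/existsP=> j /andP [jSw /eqP Mj].
  right; exists j, (M0 j); split => //; split.
  - move=> i; rewrite in_setU1; case/orP => [/eqP -> | /IA //].
    by rewrite Mj; apply/eqP => -[] /eqP; rewrite eq_sym (negbTE ab).
  - move=> d; case: (eqVneq d b) => [-> | db].
      have : load (swQ M M0 (j |: Sw)) b <= load M b.
        apply: load_sub => i; rewrite ffunE; case: ifP => // _ Hi.
        by have := M0b i; rewrite Hi eqxx.
      have := LM b; lia.
    have U := load_upd d (swQ_upd M M0 Sw (j:=j)).
    rewrite !ffunE setU11 (negbTE jSw) Mj in U.
    have : (Some b == Some d) = false by apply/eqP => -[]; apply/eqP; rewrite eq_sym.
    move=> E; rewrite E in U; have := IB d; lia.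
  - move=> d; have U := load_upd d (swP_upd M M0 Sw (j:=j)).
    rewrite !ffunE setU11 (negbTE jSw) in U.
    have := PC d; rewrite [M0 j == _]eq_sym in U; lia.
move=> /existsPn NB; left; split.
  split => // c; have := PC c; lia.
move=> i Mi; have := NB i; rewrite Mi eqxx andbT; by rewrite negbK.
Qed.

Lemma swap_exists (n m C : nat) (M M0 : {ffun 'I_n -> option 'I_m}) (a b : 'I_m) :
  a != b ->
  (forall i, M0 i != Some a) -> (forall i, M0 i != Some b) ->
  (forall c, load M c <= C) -> (forall c, load M0 c <= C) ->
  exists Sw, inv_ok C M M0 a Sw None /\ (forall i, M i = Some b -> i \in Sw).
Proof.
move=> ab M0a M0b LM LM0.
suff H : forall k Sw h, #|~: Sw| <= k -> inv_ok C M M0 a Sw h ->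
   exists Sw, inv_ok C M M0 a Sw None /\ (forall i, M i = Some b -> i \in Sw).
  apply: (H n set0 None); first by rewrite -[X in _ <= X]card_ord max_card.
  split.
  - by move=> i; rewrite in_set0.
  - move=> c; rewrite /load (eq_card (B := [set i | M0 i == Some c])) ?LM0 //.
    by move=> i; rewrite !inE ffunE in_set0.
  - move=> c; rewrite /load (eq_card (B := [set i | M i == Some c])) ?addn0 ?LM //.
    by move=> i; rewrite !inE ffunE in_set0.
elim=> [|k IH] Sw h Hk Hinv.
  case: (swap_step ab M0a M0b LM LM0 Hinv) => [[? ?]|[j [h' [jSw _]]]]; first by exists Sw.
  have : 0 < #|~: Sw| by apply/card_gt0P; exists j; rewrite inE.
  lia.
case: (swap_step ab M0a M0b LM LM0 Hinv) => [[? ?]|[j [h' [jSw Hinv']]]]; first by exists Sw.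
apply: (IH _ h' _ Hinv').
have : #|~: (j |: Sw)| < #|~: Sw|.
  apply: proper_card; apply/properP; split.
    by apply/subsetP => i; rewrite !inE negb_or => /andP [].
  by exists j; rewrite !inE ?eqxx.
lia.
Qed.

Lemma best_ub (n m K : nat) alpha (P : profile n m) S Phi :
  partial_for K S Phi -> ell alpha P Phi <= best K alpha P S.
Proof. move=> H; rewrite /best; exact: (@leq_bigmax_cond _ (fun x => partial_for K S x) (fun x => ell alpha P x) Phi H). Qed.

Lemma none_partial (n m K : nat) (S : {set 'I_m}) :
  partial_for K S [ffun i : 'I_n => None].
Proof.
apply/andP; split; apply/forallP => x; rewrite ?ffunE //.
apply: leq_trans (leq0n _); rewrite leqn0 cards_eq0; apply/eqP/setP => i.
by rewrite !inE ffunE.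
Qed.

Lemma best_ex (n m K : nat) alpha (P : profile n m) S :
  exists2 Phi, partial_for K S Phi & ell alpha P Phi = best K alpha P S.
Proof.
have [Phi0 H0 E] := @eq_bigmax_cond _ [pred Phi | partial_for K S Phi] (fun x => ell alpha P x)
  (ltac:(apply/card_gt0P; exists [ffun i : 'I_n => None]; exact: none_partial)).
by exists Phi0 => //; rewrite /best E.
Qed.

Lemma partialP (n m K : nat) (S : {set 'I_m}) (Phi : {ffun 'I_n -> option 'I_m}) :
  partial_for K S Phi <->
  (forall i c, Phi i = Some c -> c \in S) /\ (forall c, load Phi c <= cap n K).
Proof.
split.
  case/andP => /forallP H1 /forallP H2; split => // i c E; by have := H1 i; rewrite E.
case=> H1 H2; apply/andP; split; apply/forallP => x //.
  by case E: (Phi x) => [c|] //; apply: H1 E.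
exact: H2.
Qed.

Lemma best_4pt (n m K : nat) alpha (P : profile n m) (X : {set 'I_m}) (a b : 'I_m) :
  a \notin X -> b \notin X -> a != b ->
  best K alpha P (a |: (b |: X)) + best K alpha P X <=
  best K alpha P (a |: X) + best K alpha P (b |: X).
Proof.
move=> aX bX ab.
have [M /partialP [M1 M2] EM] := best_ex K alpha P (a |: (b |: X)).
have [M0 /partialP [N1 N2] EM0] := best_ex K alpha P X.
have M0a : forall i, M0 i != Some a.
  by move=> i; apply/eqP => /N1; rewrite (negbTE aX).
have M0b : forall i, M0 i != Some b.
  by move=> i; apply/eqP => /N1; rewrite (negbTE bX).
have [Sw [[IA IB IC] IS]] := swap_exists ab M0a M0b M2 N2.
rewrite -EM -EM0.
have HP : partial_for K (a |: X) (swP M M0 Sw).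
  apply/partialP; split; last by move=> c; have := IC c; rewrite addn0.
  move=> i c; rewrite ffunE; case: ifP => iSw.
    by move/N1; rewrite in_setU1 => ->; rewrite orbT.
  move=> Mi; have := M1 _ _ Mi; rewrite !in_setU1; case/or3P => [->//|/eqP cb|->]; last by rewrite orbT.
  by subst c; move: (IS _ Mi); rewrite iSw.
have HQ : partial_for K (b |: X) (swQ M M0 Sw).
  apply/partialP; split => // i c; rewrite ffunE; case: ifP => iSw; last first.
    by move/N1; rewrite in_setU1 => ->; rewrite orbT.
  move=> Mi; have := M1 _ _ Mi; rewrite !in_setU1; case/or3P => [/eqP ca|->//|->]; last by rewrite orbT.
  by subst c; move: (IA _ iSw); rewrite Mi eqxx.
have E : ell alpha P M + ell alpha P M0 = ell alpha P (swP M M0 Sw) + ell alpha P (swQ M M0 Sw).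
  rewrite /ell -!big_split /=; apply: eq_bigr => i _; rewrite !ffunE.
  by case: (i \in Sw) => //; rewrite addnC.
rewrite E; apply: leq_add; exact: best_ub.
Qed.

Lemma submod_D1 (m : nat) (f : {set 'I_m} -> nat) :
  (forall A B : {set 'I_m}, A \subset B -> f A <= f B) ->
  (forall (X : {set 'I_m}) a b, a \notin X -> b \notin X -> a != b ->
     f (a |: (b |: X)) + f X <= f (a |: X) + f (b |: X)) ->
  forall (A B : {set 'I_m}) a, A \subset B -> f (a |: B) + f A <= f (a |: A) + f B.
Proof.
move=> mono f4.
suff H : forall k (A B : {set 'I_m}) a, #|B :\: A| <= k -> A \subset B -> f (a |: B) + f A <= f (a |: A) + f B.
  by move=> A B a; apply: H (leqnn _).
elim=> [|k IH] A B a Hk AB.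
  have BA : B = A.
    apply/eqP; rewrite eqEsubset AB andbT -setD_eq0 -cards_eq0; lia.
  by subst B; rewrite addnC.
case: (boolP (a \in B)) => aB.
  rewrite (setUidPr (_ : [set a] \subset B)) ?sub1set // addnC leq_add2r; apply: mono; exact: subsetUr.
case: (set_0Vmem (B :\: A)) => [E | [b]].
  have BA : B = A by apply/eqP; rewrite eqEsubset AB andbT -setD_eq0 E.
  by subst B; rewrite addnC.
rewrite inE => /andP [bA bB].
set B' := B :\ b.
have AB' : A \subset B'.
  apply/subsetP => x xA; rewrite !inE (subsetP AB _ xA) andbT.
  by apply: contraNneq bA => <-.
have Hk' : #|B' :\: A| <= k.
  have : #|B' :\: A| < #|B :\: A|.
    apply: proper_card; apply/properP; split.
      by apply/subsetP => x; rewrite !inE => /andP [-> /andP [_ ->]].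
    by exists b; rewrite !inE ?eqxx ?bA ?bB.
  lia.
have IH' := IH A B' a Hk' AB'.
have aB' : a \notin B' by rewrite !inE negb_and aB orbT.
have bB' : b \notin B' by rewrite !inE eqxx.
have ab : a != b by apply: contraNneq aB => ->.
have F := f4 B' a b aB' bB' ab.
have EB : b |: B' = B by rewrite setD1K.
rewrite EB in F; lia.
Qed.

Lemma submod_D2 (m : nat) (f : {set 'I_m} -> nat) :
  (forall A B : {set 'I_m}, A \subset B -> f A <= f B) ->
  (forall (X : {set 'I_m}) a b, a \notin X -> b \notin X -> a != b ->
     f (a |: (b |: X)) + f X <= f (a |: X) + f (b |: X)) ->
  forall A (T : {set 'I_m}), f (A :|: T) + #|T| * f A <= f A + \sum_(t in T) f (t |: A).
Proof.
move=> mono f4 A.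
suff H : forall k (T : {set 'I_m}), #|T| <= k -> f (A :|: T) + #|T| * f A <= f A + \sum_(t in T) f (t |: A).
  by move=> T; apply: H (leqnn _).
elim=> [|k IH] T Hk.
  have -> : T = set0 by apply/eqP; rewrite -cards_eq0; lia.
  by rewrite setU0 cards0 big_set0.
case: (set_0Vmem T) => [-> | [t tT]].
  by rewrite setU0 cards0 big_set0.
have Hk' : #|T :\ t| <= k by move: Hk; rewrite (cardsD1 t T) tT add1n.
have IH' := IH (T :\ t) Hk'.
have D := submod_D1 mono f4 t (subsetUl A (T :\ t)).
have E1 : t |: (A :|: (T :\ t)) = A :|: T.
  by rewrite setUCA setD1K.
rewrite E1 in D.
rewrite (cardsD1 t T) tT (big_setD1 t tT) /= add1n mulSn.
move: IH' D; set x := #|T :\ t|; set y := \sum_(_ in _) _; lia.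
Qed.

Lemma best_mono (n m K : nat) alpha (P : profile n m) (A B : {set 'I_m}) :
  A \subset B -> best K alpha P A <= best K alpha P B.
Proof.
move=> AB; have [Phi /partialP [H1 H2] <-] := best_ex K alpha P A.
apply: best_ub; apply/partialP; split => // i c /H1; exact: (subsetP AB).
Qed.

Lemma prefix_succ (K m : nat) (s : 'I_K -> 'I_m) (k : 'I_K) :
  prefix_set s k.+1 = s k |: prefix_set s k.
Proof.
apply/setP => x; rewrite in_setU1; apply/imsetP/orP.
  case=> j; rewrite inE /= ltnS leq_eqVlt => /orP [/eqP jk | jk] ->.
    by left; rewrite (_ : j = k) //; apply: val_inj.
  by right; apply/imsetP; exists j.
case=> [/eqP -> | /imsetP [j jk ->]]; first by exists k; rewrite // inE /=.
by exists j => //; move: jk; rewrite !inE /=; apply: ltnW.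
Qed.

Lemma OPT_bound (n m K : nat) alpha (P : profile n m) :
  exists T : {set 'I_m}, #|T| <= K /\ OPT K alpha P <= best K alpha P T.
Proof.
case: (boolP [exists Psi : {ffun 'I_n -> 'I_m}, monroe K Psi]).
  case/existsP => Psi0 H0.
  have [Psi HPsi E] := @eq_bigmax_cond _ [pred x | monroe K x] (fun x => ell_tot alpha P x)
    (ltac:(apply/card_gt0P; exists Psi0; exact: H0)).
  move: HPsi; rewrite inE => /andP [HT /forallP Hc].
  exists [set Psi i | i in 'I_n]; split => //.
  rewrite /OPT E.
  have -> : ell_tot alpha P Psi = ell alpha P [ffun i => Some (Psi i)].
    by rewrite /ell /ell_tot; apply: eq_bigr => i _; rewrite ffunE.
  apply: best_ub; apply/partialP; split.
    by move=> i c; rewrite ffunE => -[<-]; apply: imset_f.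
  move=> c; rewrite /load (eq_card (B := [set i | Psi i == c])) ?Hc //.
  by move=> i; rewrite !inE ffunE.
move=> /existsPn H; exists set0; split; first by rewrite cards0.
rewrite /OPT big_pred0 // => x; exact: negbTE (H x).
Qed.

Lemma ell_upd (n m : nat) alpha (P : profile n m) (F G : {ffun 'I_n -> option 'I_m}) (j : 'I_n) :
  (forall i, i != j -> G i = F i) ->
  ell alpha P G + alpha (opos P j (F j)) = ell alpha P F + alpha (opos P j (G j)).
Proof.
move=> H; rewrite /ell (bigD1 j) //= [in RHS](bigD1 j) //=.
rewrite (eq_bigr (fun i => alpha (opos P i (F i)))).
  by rewrite [LHS]addnAC [RHS]addnAC (addnC (alpha (opos P j (G j)))).
by move=> i /H ->.
Qed.

Lemma sum_load (n m : nat) (S : {set 'I_m}) (F : {ffun 'I_n -> option 'I_m}) :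
  (forall i c, F i = Some c -> c \in S) ->
  \sum_(c in S) load F c = #|[set i | F i != None]|.
Proof.
move=> H; rewrite /load.
under eq_bigr do rewrite card_set_sum.
rewrite exchange_big card_set_sum; apply: eq_bigr => i _.
case E: (F i) => [d|] /=.
  rewrite (bigD1 d) ?(H _ _ E) //= eqxx big1 // => c /andP [_ cd].
  by apply/eqP; rewrite eqb0; apply/eqP => -[] /eqP; rewrite eq_sym (negbTE cd).
by rewrite big1.
Qed.

Lemma cap_ge (n K : nat) : 0 < K -> n <= K * cap n K.
Proof.
move=> K0; rewrite /cap.
have := divn_eq (n + K.-1) K; have := ltn_pmod (n + K.-1) K0; lia.
Qed.

Lemma complete_none (n m K : nat) alpha (P : profile n m) (S : {set 'I_m}) Phi :
  nonincreasing_on m alpha -> 0 < K -> #|S| = K ->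
  partial_for K S Phi ->
  (forall Psi, partial_for K S Psi -> ell alpha P Psi <= ell alpha P Phi) ->
  exists2 Phi2, partial_for K S Phi2 /\ ell alpha P Phi2 = ell alpha P Phi &
     forall i, Phi2 i != None.
Proof.
move=> nonin K0 SK HPhi opt.
suff H : forall k (Psi : {ffun 'I_n -> option 'I_m}), #|[set i | Psi i == None]| <= k -> partial_for K S Psi ->
    ell alpha P Psi = ell alpha P Phi ->
    exists2 Phi2, partial_for K S Phi2 /\ ell alpha P Phi2 = ell alpha P Phi &
     forall i, Phi2 i != None.
  exact: (H _ Phi (leqnn _)).
elim=> [|k IH] Psi Hk HPsi EPsi.
  exists Psi => // i; apply/negP => /eqP Ei.
  have : 0 < #|[set i | Psi i == None]| by apply/card_gt0P; exists i; rewrite inE Ei.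
  lia.
case: (boolP [exists i, Psi i == None]); last first.
  move/existsPn => H; exists Psi => // i; exact: H.
case/existsP => i0 /eqP E0.
move: (HPsi) => /partialP [H1 H2].
have [c cS cL] : exists2 c, c \in S & load Psi c < cap n K.
  case: (boolP [exists c, (c \in S) && (load Psi c < cap n K)]).
    by case/existsP => c /andP [? ?]; exists c.
  move/existsPn => Hn; exfalso.
  have L1 : K * cap n K <= \sum_(c in S) load Psi c.
    rewrite -{1}SK -sum_nat_const; apply: leq_sum => c cS.
    by have := Hn c; rewrite cS /= -leqNgt.
  rewrite sum_load // in L1.
  have L2 : #|[set i | Psi i != None]| < n.
    rewrite -[X in _ < X]card_ord; apply: proper_card; apply/properP; split.
      by apply/subsetP.
    by exists i0; rewrite // inE E0.
  have := cap_ge n K0; lia.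
set Psi' := [ffun i => if i == i0 then Some c else Psi i].
have upd : forall i, i != i0 -> Psi' i = Psi i by move=> i /negbTE ne; rewrite ffunE ne.
have HPsi' : partial_for K S Psi'.
  apply/partialP; split.
    move=> i d; rewrite ffunE; case: eqP => _; [by case=> <- | exact: H1].
  move=> d; have U := load_upd d upd; rewrite ffunE eqxx E0 in U.
  case: (eqVneq d c) U => [-> | dc] U; first by rewrite eqxx in U; lia.
  have : (Some c == Some d) = false by apply/eqP => -[]; apply/eqP; rewrite eq_sym.
  move=> E; rewrite E in U; have := H2 d; lia.
have Ell : ell alpha P Psi' = ell alpha P Phi.
  have U := ell_upd alpha P upd; rewrite ffunE eqxx E0 /= in U.
  have A1 : alpha m <= alpha (Defs.pos P i0 c).
    apply: nonin; rewrite /Defs.pos //; exact: ltn_ord.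
  have := opt _ HPsi'; lia.
apply: (IH Psi') => //.
rewrite -ltnS; apply: leq_trans Hk.
apply: proper_card; apply/properP; split.
  by apply/subsetP => i; rewrite !inE ffunE; case: (i == i0).
by exists i0; rewrite !inE ?E0 ?ffunE ?eqxx.
Qed.

Lemma complete (n m K : nat) alpha (P : profile n m) (S : {set 'I_m}) Phi :
  nonincreasing_on m alpha -> 0 < K -> #|S| = K ->
  partial_for K S Phi ->
  (forall Psi, partial_for K S Psi -> ell alpha P Psi <= ell alpha P Phi) ->
  exists Phi' : {ffun 'I_n -> 'I_m}, monroe K Phi' /\ ell_tot alpha P Phi' = ell alpha P Phi.
Proof.
move=> nonin K0 SK HPhi opt.
have [Phi2 [/partialP [H1 H2] E] HN] := complete_none nonin K0 SK HPhi opt.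
have [c0 _] : exists c0 : 'I_m, c0 \in S by apply/card_gt0P; rewrite SK.
set Phi' := [ffun i => odflt c0 (Phi2 i)].
have EP : forall i, Phi2 i = Some (Phi' i).
  by move=> i; rewrite ffunE; have := HN i; case: (Phi2 i).
exists Phi'; split; last first.
  by rewrite -E /ell /ell_tot; apply: eq_bigr => i _; rewrite EP.
apply/andP; split.
  rewrite -SK; apply: subset_leq_card; apply/subsetP => x /imsetP [i _ ->].
  exact: (H1 i _ (EP i)).
apply/forallP => a; rewrite (eq_card (B := [set i | Phi2 i == Some a])) ?H2 //.
by move=> i; rewrite !inE EP.
Qed.
Local Open Scope R_scope.
Lemma exp_pow_INR (a : R) (n : nat) : (exp a ^ n = exp (INR n * a)).
Proof.
elim: n => [|n IH] /=; first by rewrite Rmult_0_l exp_0.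
rewrite IH -exp_plus; congr exp; case: n {IH} => [|n] /=; ring.
Qed.

Lemma nat_ineq_R (a b c d : nat) : (a + b * c <= c + b * d)%N ->
  (INR a + INR b * INR c <= INR c + INR b * INR d).
Proof.
move/leP => H; have := le_INR _ _ H.
by rewrite !plus_INR !mult_INR.
Qed.

Lemma greedy_real (K O : nat) (g : nat -> nat) : (1 <= K)%N ->
  (forall k, (k < K)%N -> (O + K * g k <= g k + K * g k.+1)%N) ->
  Rle (Rmult one_minus_inv_e (INR O)) (INR (g K)).
Proof.
move=> K1 H.
have xK : (1 <= INR K) by apply: (le_INR 1); apply/leP.
set x := INR K in xK.
set y := (/ x).
have xy : (x * y = 1) by rewrite /y; field; lra.
have y0 : (0 < y) by apply: Rinv_0_lt_compat; lra.
have y1 : (y <= 1) by rewrite /y -Rinv_1; apply: Rinv_le_contravar; lra.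
have O0 := pos_INR O.
have claim : forall k, (k <= K)%N -> (INR O - INR (g k) <= (1 - y) ^ k * INR O).
  elim=> [|k IH] Hk /=.
    have := pos_INR (g 0%N); lra.
  have Hk' : (k < K)%N by [].
  have := @nat_ineq_R _ _ _ _ (H k Hk'); rewrite -/x => Hn.
  have IH' := IH (ltnW Hk').
  have A : (INR O - INR (g k.+1) <= (1 - y) * (INR O - INR (g k))).
    have : (0 <= y * (x * INR (g k.+1) - x * INR (g k) - INR O + INR (g k))).
      apply: Rmult_le_pos; lra.
    have E1 : (y * (x * INR (g k.+1)) = INR (g k.+1)) by rewrite -Rmult_assoc (Rmult_comm y) xy; ring.
    have E2 : (y * (x * INR (g k)) = INR (g k)) by rewrite -Rmult_assoc (Rmult_comm y) xy; ring.
    nra.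
  have B : ((1 - y) * (INR O - INR (g k)) <= (1 - y) * ((1 - y) ^ k * INR O)).
    apply: Rmult_le_compat_l; lra.
  lra.
have C := claim K (leqnn K).
have D : ((1 - y) ^ K <= / exp 1).
  apply: Rle_trans (pow_incr (1 - y) (exp (- y)) K _) _.
    split; first lra.
    have := exp_ineq1_le (- y); lra.
  rewrite exp_pow_INR -/x -exp_Ropp.
  have -> : (x * - y = - 1) by rewrite Ropp_mult_distr_r_reverse xy.
  rewrite exp_Ropp; lra.
rewrite /one_minus_inv_e.
have : ((1 - y) ^ K * INR O <= / exp 1 * INR O) by apply: Rmult_le_compat_r.
lra.
Qed.
Local Close Scope R_scope.

Theorem mainTheorem12 :
  forall (n m K : nat) (alpha : nat -> nat) (P : profile n m),
    nonincreasing_on m alpha ->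
    1 <= K -> K <= m ->
    forall s : 'I_K -> 'I_m,
      GM_run alpha P s ->
      forall Phi : {ffun 'I_n -> option 'I_m},
        (* Phi is a choice of Phi^S_alpha for the final S *)
        partial_for K (prefix_set s K) Phi ->
        (forall Psi : {ffun 'I_n -> option 'I_m},
            partial_for K (prefix_set s K) Psi -> ell alpha P Psi <= ell alpha P Phi) ->
        (exists Phi' : {ffun 'I_n -> 'I_m},
            monroe K Phi' /\ ell_tot alpha P Phi' = ell alpha P Phi) /\
        Rle (Rmult one_minus_inv_e (INR (OPT K alpha P))) (INR (ell alpha P Phi)).
Proof.
move=> n m K alpha P nonin K1 Km s GM Phi HPhi opt.
have inj : injective s.
  move=> i j E; apply: val_inj; case: (ltngtP i j) => // ij.
    have [H _] := GM j; case/negP: H; rewrite -E; apply/imsetP; exists i => //.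
  have [H _] := GM i; case/negP: H; rewrite E; apply/imsetP; exists j => //.
have SK : #|prefix_set s K| = K.
  rewrite /prefix_set card_imset // -[RHS]card_ord; apply: eq_card => j.
  by rewrite !inE /= ltn_ord.
split; first exact: complete nonin K1 SK HPhi opt.
have mono := @best_mono n m K alpha P.
have f4 := @best_4pt n m K alpha P.
have [T [TK OT]] := OPT_bound K alpha P.
have key : forall k, k < K ->
   OPT K alpha P + K * best K alpha P (prefix_set s k) <=
   best K alpha P (prefix_set s k) + K * best K alpha P (prefix_set s k.+1).
  move=> k kK; set A := prefix_set s k.
  have [_ G] := GM (Ordinal kK).
  have PS := prefix_succ s (Ordinal kK).
  have D := submod_D2 mono f4 A T.
  have Sm : \sum_(t in T) best K alpha P (t |: A) <= #|T| * best K alpha P (prefix_set s k.+1).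
    rewrite -sum_nat_const; apply: leq_sum => t _; rewrite PS.
    case: (boolP (t \in A)) => tA; last exact: G.
    rewrite (setUidPr (_ : [set t] \subset A)) ?sub1set //; apply: mono; exact: subsetUr.
  have M1 : best K alpha P A <= best K alpha P (prefix_set s k.+1).
    by rewrite PS; apply: mono; apply: subsetUr.
  have M2 : best K alpha P T <= best K alpha P (A :|: T) by apply: mono; apply: subsetUr.
  have [d Ed] : exists d, K = #|T| + d by exists (K - #|T|); lia.
  have M3 := leq_mul (leqnn d) M1.
  move: D Sm M1 M2 M3 OT.
  set x := best K alpha P A; set y := best K alpha P (prefix_set s k.+1).
  set z := best K alpha P (A :|: T); set w := best K alpha P T.
  set u := \sum_(t in T) _; set o := OPT K alpha P; set t := #|T|.
  have E1 : K * x = t * x + d * x by rewrite Ed mulnDl.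
  have E2 : K * y = t * y + d * y by rewrite Ed mulnDl.
  rewrite E1 E2; nia.
have gK : ell alpha P Phi = best K alpha P (prefix_set s K).
  apply/eqP; rewrite eqn_leq best_ub //=.
  have [Phi0 H0 <-] := best_ex K alpha P (prefix_set s K); exact: opt.
rewrite gK; exact: (greedy_real (g := fun k => best K alpha P (prefix_set s k)) K1 key).
Qed.
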